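(* Fix a diagram $D\subseteq[n]\times[n]$ and $k,l\in[n]$. Let $\{\widehat{C}^{(i)}\}_{i\in[m]}$ be diagrams with $\widehat{C}^{(i)}\le\widehat{D}$ for each $i$, and write $C^{(i)}=\widehat{C}^{(i)}_{\mathrm{aug}}$. If the polynomials $\Big\{\prod_{j\in[n]}\det\big(Y^{C^{(i)}_j}_{D_j}\big)\Big\}_{i\in[m]}$ are linearly dependent over $\mathbb{C}$, then so are the polynomials $\Big\{\prod_{j\in[n]\setminus\{l\}}\det\big(Y^{\widehat{C}^{(i)}_j}_{\widehat{D}_j}\big)\Big\}_{i\in[m]}$.
   Context: A diagram $D\subseteq[n]\times[n]$ is a set of boxes $(i,j)$ (row $i$, column $j$), identified with its column sequence $(D_1,\dots,D_n)$, $D_j=\{i:(i,j)\in D\}$. For $R,S\subseteq[n]$, $R\le S$ means $\#R=\#S$ and the $k$-th smallest element of $R$ is at most the $k$-th smallest element of $S$ for each $k$; for diagrams $C\le D$ means $C_j\le D_j$ for all $j$. $\widehat{C},\widehat{D}$ denote the diagrams obtained by removing all boxes in row $k$ or column $l$, and $\widehat{C}_{\mathrm{aug}}=\widehat{C}\cup\{(k,i):(k,i)\in D\}\cup\{(i,l):(i,l)\in D\}$. $Y$ is the $n\times n$ upper-triangular matrix with indeterminates $y_{ij}$ ($i\le j$) and zeros below the diagonal; $Y^R_S$ is its submatrix with rows $R$ and columns $S$; the determinant of an empty matrix is $1$. The polynomials live in $\mathbb{C}[y_{ij}: i\le j]$. *)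

(* Defs.v *)
From HB Require Import structures.
From mathcomp Require Import all_boot all_algebra.
From mathcomp Require Import reals.
From mathcomp Require Import complex.
From mathcomp Require Import mpoly.
Set Implicit Arguments. Unset Strict Implicit. Unset Printing Implicit Defensive.
Import GRing.Theory.
Local Open Scope ring_scope.

(* A diagram in [n] x [n]: a set of boxes (row, column), 0-indexed. *)
Definition diagram (n : nat) := {set 'I_n * 'I_n}.

Definition dcol n (D : diagram n) (j : 'I_n) : {set 'I_n} :=
  [set i | (i, j) \in D].

Definition sorted_elems n (R : {set 'I_n}) : seq nat :=
  sort leq [seq val x | x <- enum R].

Definition set_le n (R S : {set 'I_n}) : bool :=
  (#|R| == #|S|) &&
  all (fun k => nth 0%N (sorted_elems R) k <= nth 0%N (sorted_elems S) k)%N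
      (iota 0 #|R|).

Definition diag_le n (C D : diagram n) : bool :=
  [forall j, set_le (dcol C j) (dcol D j)].

Definition dhat n (k l : 'I_n) (D : diagram n) : diagram n :=
  [set p in D | (p.1 != k) && (p.2 != l)].

Definition daug n (k l : 'I_n) (D Chat : diagram n) : diagram n :=
  Chat :|: [set p in D | p.1 == k] :|: [set p in D | p.2 == l].

(* The polynomial ring C[y_ij] : one variable per pair (i,j), indexed by
   mxvec_index i j; only the variables with i <= j are used. *)
Notation ypoly R n := {mpoly (complex R)[n * n]}.

Definition Yent (R : realType) (n : nat) (i j : nat) : ypoly R n :=
  match @insub _ (fun x => x < n)%N 'I_n i, @insub _ (fun x => x < n)%N 'I_n j with
  | Some i', Some j' => if (i <= j)%N then 'X_(mxvec_index i' j') else 0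
  | _, _ => 0
  end.

(* det (Y^Rw_Cl) : the minor of Y with rows Rw and columns Cl (in increasing
   order); the determinant of the empty matrix is 1.  Only used when
   #Rw = #Cl (returns 0 otherwise, never happens in the statement). *)
Definition yminor (R : realType) n (Rw Cl : {set 'I_n}) : ypoly R n :=
  if #|Rw| == #|Cl| then
    \det (\matrix_(a < #|Cl|, b < #|Cl|)
           Yent R n (nth 0%N (sorted_elems Rw) a) (nth 0%N (sorted_elems Cl) b))
  else 0.

Definition lin_dependent (K : fieldType) (V : lmodType K) (m : nat)
    (p : 'I_m -> V) : Prop :=
  exists c : 'I_m -> K, (exists i, c i != 0) /\ \sum_(i < m) c i *: p i = 0.

(* Main.v *)
Require Import Defs.
From HB Require Import structures.
From mathcomp Require Import all_boot all_algebra.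
From mathcomp Require Import reals.
From mathcomp Require Import complex.
From mathcomp Require Import mpoly.
Import GRing.Theory.
Local Open Scope ring_scope.
Set Implicit Arguments. Unset Strict Implicit. Unset Printing Implicit Defensive.

Lemma size_sorted_elems n (A : {set 'I_n}) : size (sorted_elems A) = #|A|.
Proof. by rewrite /sorted_elems size_sort size_map -cardE. Qed.

Lemma sorted_elems_sorted n (A : {set 'I_n}) : sorted leq (sorted_elems A).
Proof. exact: (sort_sorted leq_total). Qed.

Lemma mem_sorted_elems n (A : {set 'I_n}) x :
  (x \in sorted_elems A) = [exists y in A, x == val y].
Proof.
rewrite /sorted_elems mem_sort; apply/mapP/existsP => [[y]|[y /andP[]]].
  by rewrite mem_enum => yA ->; exists y; rewrite yA eqxx.
by move=> yA /eqP ->; exists y; rewrite ?mem_enum.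
Qed.

Lemma uniq_sorted_elems n (A : {set 'I_n}) : uniq (sorted_elems A).
Proof. by rewrite /sorted_elems sort_uniq (map_inj_uniq val_inj) enum_uniq. Qed.

Lemma nth_sorted_elems n (A : {set 'I_n}) a : (a < #|A|)%N ->
  exists2 y, y \in A & nth 0%N (sorted_elems A) a = val y.
Proof.
move=> ha; have : nth 0%N (sorted_elems A) a \in sorted_elems A.
  by apply: mem_nth; rewrite size_sorted_elems.
by rewrite mem_sorted_elems => /existsP[y /andP[yA /eqP ->]]; exists y.
Qed.

Lemma sorted_elems_setU1 n (A : {set 'I_n}) (k : 'I_n) : k \notin A ->
  sorted_elems (k |: A) =
  take (find (fun x => k < x)%N (sorted_elems A)) (sorted_elems A) ++
   val k :: drop (find (fun x => k < x)%N (sorted_elems A)) (sorted_elems A).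
Proof.
move=> kA; set s := sorted_elems A; set p := find _ s.
have ss : sorted leq s := sorted_elems_sorted A.
apply: (sorted_eq leq_trans anti_leq).
- exact: sorted_elems_sorted.
- rewrite (sorted_pairwise leq_trans) pairwise_cat pairwise_cons.
  move: ss; rewrite (sorted_pairwise leq_trans) -{1}(cat_take_drop p s).
  rewrite pairwise_cat => /and3P[h1 h2 h3].
  rewrite h2 h3 andbT /= allrel_consr h1 andbT.
  apply/andP; split.
    apply/(all_nthP 0%N) => i; rewrite size_takel ?find_size // => hip.
    rewrite nth_take //; have := before_find 0%N hip; by rewrite ltnNge => /negbFE.
  case ed: (drop p s) => [|y d] //=.
  have hps : (p < size s)%N by rewrite ltnNge -subn_eq0 -size_drop ed.
  have yE : y = nth 0%N s p by rewrite -[p]addn0 -nth_drop ed.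
  move: h3; rewrite ed pairwise_cons => /andP[hy _].
  rewrite yE; have hk : (k < nth 0%N s p)%N by apply: (nth_find 0%N); rewrite has_find.
  rewrite (ltnW hk) /=; apply/allP => z zd; apply: leq_trans (ltnW hk) _.
  rewrite -yE; exact: (allP hy).
- rewrite perm_sym -cat1s perm_catCA /= cat_take_drop perm_sym.
  rewrite /sorted_elems /s /sorted_elems perm_sort.
  apply: (perm_trans (perm_map val (_ : perm_eq _ (k :: enum A)))).
    apply: uniq_perm; first exact: enum_uniq.
      by rewrite /= mem_enum kA enum_uniq.
    by move=> x; rewrite in_cons !mem_enum in_setU1.
  by rewrite /= perm_cons perm_sym perm_sort.
Qed.
Lemma nth_ins (s : seq nat) p x a : (p <= size s)%N ->
  nth 0%N (take p s ++ x :: drop p s) (bump p a) = nth 0%N s a.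
Proof.
move=> hp; rewrite nth_cat size_takel // /bump.
case: (leqP p a) => h.
  rewrite add1n ltnNge leqW //= subSn //= nth_drop subnKC //.
rewrite add0n h nth_take //.
Qed.

Lemma nth_ins_p (s : seq nat) p x : (p <= size s)%N ->
  nth 0%N (take p s ++ x :: drop p s) p = x.
Proof. by move=> hp; rewrite nth_cat size_takel // ltnn subnn. Qed.

Lemma det_row_single (T : comRingType) N (g : nat -> nat -> T) (p q : 'I_N.+1) :
  (forall b : 'I_N.+1, b != q -> g p b = 0) ->
  \det (\matrix_(a < N.+1, b < N.+1) g a b) =
  (-1) ^+ (p + q) * g p q * \det (\matrix_(a < N, b < N) g (bump p a) (bump q b)).
Proof.
move=> H; rewrite (expand_det_row _ p) (bigD1 q) //= big1 => [|b bq]; last first.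
  by rewrite mxE H ?mul0r.
rewrite addr0 mxE /cofactor mulrCA mulrA; congr (_ * _ * \det _).
by apply/matrixP => a b; rewrite !mxE.
Qed.
Lemma mxvec_index_inj n (i j i' j' : 'I_n) :
  (mxvec_index i j == mxvec_index i' j') = ((i == i') && (j == j')).
Proof.
apply/eqP/andP => [|[/eqP-> /eqP->]] //.
by move/cast_ord_inj/enum_rank_inj => [-> ->].
Qed.

Lemma Yent_ord (R : realType) n (r c : 'I_n) :
  Yent R n r c = if (r <= c)%N then 'X_(mxvec_index r c) else 0.
Proof. by rewrite /Yent !valK. Qed.

Definition klq (R : realType) n (k : 'I_n) : (n * n).-tuple (ypoly R n) :=
  [tuple (if [exists c : 'I_n, (c != k) && (v == mxvec_index k c)] then 0
          else 'X_v) | v < n * n].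

Lemma kill_Y (R : realType) n (k r c : 'I_n) :
  comp_mpoly (klq R k) (Yent R n r c) =
  if (r == k) && (c != k) then 0 else Yent R n r c.
Proof.
rewrite Yent_ord; case: ifP => hrc; last by rewrite raddf0; case: ifP.
rewrite comp_mpolyXU -tnth_nth tnth_mktuple.
have -> : [exists c0 : 'I_n, (c0 != k) && (mxvec_index r c == mxvec_index k c0)]
          = (r == k) && (c != k).
  apply/existsP/andP => [[c0 /andP[h1]]|[h1 h2]].
    by rewrite mxvec_index_inj => /andP[-> /eqP->].
  by exists c; rewrite h2 mxvec_index_inj h1 eqxx.
by [].
Qed.

Definition dpt (R : realType) n : 'I_(n * n) -> complex R :=
  fun v => if [exists i : 'I_n, v == mxvec_index i i] then 1 else 0.

Lemma ev_Y (R : realType) n (r c : 'I_n) :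
  meval (@dpt R n) (Yent R n r c) = (r == c)%:R.
Proof.
rewrite Yent_ord; case: ifP => hrc; last first.
  rewrite meval0; case: eqP => // e; by move: hrc; rewrite e leqnn.
rewrite mevalXU /dpt.
have -> : [exists i : 'I_n, mxvec_index r c == mxvec_index i i] = (r == c).
  apply/existsP/idP => [[i0]|/eqP->]; last by exists c.
  by rewrite mxvec_index_inj => /andP[/eqP-> /eqP->].
by case: (r == c).
Qed.

Notation kill R k := (comp_mpoly (klq R k)).

Lemma kill_minor_fix (R : realType) n (k : 'I_n) (A B : {set 'I_n}) :
  k \notin A -> kill R k (yminor R A B) = yminor R A B.
Proof.
move=> kA; rewrite /yminor; case: ifP => hc; last by rewrite raddf0.
rewrite -det_map_mx; congr (\det _); apply/matrixP => a b; rewrite !mxE.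
have ha : (a < #|A|)%N by rewrite (eqP hc).
have [x xA ->] := nth_sorted_elems ha.
have [y yB ->] := nth_sorted_elems (ltn_ord b).
change (comp_mpoly (klq R k) (Yent R n x y) = Yent R n x y).
rewrite kill_Y.
case: eqP => // exk; by move: kA; rewrite -exk xA.
Qed.

Lemma signZ (R : realType) n m (x : ypoly R n) :
  ((-1) ^+ m : ypoly R n) * x = ((-1) ^+ m : complex R) *: x.
Proof.
rewrite -signr_odd -[in RHS]signr_odd; case: odd;
by rewrite ?expr0 ?expr1 ?mul1r ?scale1r ?mulN1r ?scaleN1r.
Qed.

Lemma kill_minor_aug (R : realType) n (k : 'I_n) (A0 B0 : {set 'I_n}) :
  k \notin A0 -> k \notin B0 ->
  exists2 e : complex R, e != 0 &
    kill R k (yminor R (k |: A0) (k |: B0)) =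
    e *: ('X_(mxvec_index k k) * yminor R A0 B0).
Proof.
move=> kA kB; rewrite /yminor !cardsU1 kA kB /= !add1n eqSS.
case: ifP => hc; last by exists 1; rewrite ?oner_neq0 // raddf0 mulr0 scaler0.
rewrite -det_map_mx.
set N := #|B0|.
rewrite (sorted_elems_setU1 kA) (sorted_elems_setU1 kB).
set s := sorted_elems A0; set t := sorted_elems B0.
set p := find _ s; set q := find _ t.
have hsN : size s = N by rewrite size_sorted_elems (eqP hc).
have htN : size t = N by rewrite size_sorted_elems.
have hp : (p <= size s)%N by rewrite find_size.
have hq : (q <= size t)%N by rewrite find_size.
have hpN : (p < N.+1)%N by rewrite ltnS -hsN.
have hqN : (q < N.+1)%N by rewrite ltnS -htN.
Time rewrite (expand_det_row _ (Ordinal hpN)) (bigD1 (Ordinal hqN)) //.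
rewrite big1 ?addr0; last first.
  move=> b /andP[_ hb]; rewrite !mxE.
  case: (unliftP (Ordinal hqN) b) hb => [b'|] ->; last by rewrite eqxx.
  move=> _.
  have -> : (lift (Ordinal hqN) b' : nat) = bump q b' by [].
  rewrite (@nth_ins_p s p (val k) hp) (@nth_ins t q (val k) b' hq).
  have hb' : (b' < #|B0|)%N := ltn_ord b'.
  have [y yB ->] := nth_sorted_elems hb'.
  Time rewrite -[_ (Yent _ _ _ _)]/(comp_mpoly (klq R k) (Yent R n k y)).
  rewrite kill_Y eqxx andTb.
  have -> : (y != k) by apply/negP => /eqP eyk; move: kB; rewrite -eyk yB.
  by rewrite mul0r.
Time rewrite Monoid.mulm1 /cofactor !mxE (@nth_ins_p s p (val k) hp) (@nth_ins_p t q (val k) hq).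
Time rewrite -[_ (Yent _ _ _ _)]/(comp_mpoly (klq R k) (Yent R n k k)) kill_Y.
have -> : (k == k) && (k != k) = false by rewrite eqxx.
Time rewrite -map_col' -map_row' det_map_mx.
have -> : row' (Ordinal hpN) (col' (Ordinal hqN) (\matrix_(a < N.+1, b < N.+1) Yent R n
           (nth 0%N (take p s ++ \val k :: drop p s) a)
           (nth 0%N (take q t ++ \val k :: drop q t) b))) =
   \matrix_(a < N, b < N) Yent R n (nth 0%N s a) (nth 0%N t b).
  apply/matrixP => a b; rewrite !mxE.
  have -> : (lift (Ordinal hpN) a : nat) = bump p a by [].
  have -> : (lift (Ordinal hqN) b : nat) = bump q b by [].
  by rewrite (@nth_ins s p (val k) a hp) (@nth_ins t q (val k) b hq).
have hfix := @kill_minor_fix R n k A0 B0 kA.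
rewrite /yminor hc in hfix.
exists ((-1) ^+ (p + q)).
  by apply: expf_neq0; rewrite oppr_eq0 oner_eq0.
rewrite -signZ mulrCA Yent_ord leqnn.
congr (_ * (_ * _)).
Time exact: hfix.
Qed.

Lemma dcol_aug_l n (D Ch : diagram n) (k l : 'I_n) :
  (forall p, p \in Ch -> (p.1 != k) && (p.2 != l)) ->
  dcol (daug k l D Ch) l = dcol D l.
Proof.
move=> H; apply/setP => x; rewrite !inE /=.
case hC: ((x, l) \in Ch); first by have := H _ hC; rewrite eqxx andbF.
by rewrite eqxx andbT; case: ((x, l) \in D); rewrite ?orbT ?andbF.
Qed.

Lemma dcol_aug_j n (D Ch : diagram n) (k l j : 'I_n) : j != l ->
  dcol (daug k l D Ch) j =
  if (k, j) \in D then k |: dcol Ch j else dcol Ch j.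
Proof.
move=> hj; apply/setP => x; rewrite !inE /= (negbTE hj) andbF orbF.
case hk: ((k, j) \in D); rewrite !inE.
  by case: (eqVneq x k) => [->|xk]; rewrite ?hk ?andbF ?orbF ?orbT.
by case: (eqVneq x k) => [->|xk]; rewrite ?hk ?andbF ?orbF.
Qed.

Lemma dcol_D_j n (D : diagram n) (k l j : 'I_n) : j != l ->
  dcol D j =
  if (k, j) \in D then k |: dcol (dhat k l D) j else dcol (dhat k l D) j.
Proof.
move=> hj; apply/setP => x; rewrite !inE /=.
case hk: ((k, j) \in D); rewrite !inE /= hj andbT.
  by case: (eqVneq x k) => [->|xk]; rewrite ?hk ?andbT.
by case: (eqVneq x k) => [->|xk]; rewrite ?hk ?andbT ?andbF.
Qed.

Definition gcol (R : realType) n (D : diagram n) (k j : 'I_n) : ypoly R n :=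
  if (k, j) \in D then 'X_(mxvec_index k k) else 1.

Lemma col_fact (R : realType) n (D Ch : diagram n) (k l j : 'I_n) :
  (forall p, p \in Ch -> (p.1 != k) && (p.2 != l)) -> j != l ->
  exists2 e : complex R, e != 0 &
    kill R k (yminor R (dcol (daug k l D Ch) j) (dcol D j)) =
    e *: (gcol R D k j * yminor R (dcol Ch j) (dcol (dhat k l D) j)).
Proof.
move=> H hj.
have kA : k \notin dcol Ch j.
  by rewrite inE; apply/negP => /H; rewrite eqxx.
have kB : k \notin dcol (dhat k l D) j by rewrite !inE eqxx andbF.
rewrite (@dcol_aug_j _ D Ch k l j hj) (@dcol_D_j _ D k l j hj) /gcol.
case: ifP => _; first exact: kill_minor_aug.
exists 1; first exact: oner_neq0.
by rewrite mul1r scale1r kill_minor_fix.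
Qed.

Lemma G_neq0 (R : realType) n (D : diagram n) (k l : 'I_n) :
  kill R k (yminor R (dcol D l) (dcol D l)) * \prod_(j < n | j != l) gcol R D k j != 0.
Proof.
apply/negP => /eqP h0.
have := congr1 (meval (@dpt R n)) h0.
rewrite mevalM meval0 rmorph_prod big1 ?mulr1; last first.
  move=> j _; rewrite /gcol; case: ifP => _; last exact: meval1.
  change (meval (@dpt R n) 'X_(mxvec_index k k) = 1).
  rewrite mevalXU /dpt; case: existsP => // [[]]; by exists k.
rewrite /yminor eqxx comp_mpoly_meval -det_map_mx.
rewrite (_ : map_mx _ _ = 1%:M) ?det1; last first.
  apply/matrixP => a b; rewrite !mxE.
  have [x xA hx] := nth_sorted_elems (ltn_ord a).
  have [y yA hy] := nth_sorted_elems (ltn_ord b).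
  rewrite hx hy.
  change (meval (fun i => meval (@dpt R n) (tnth (klq R k) i)) (Yent R n x y) = (a == b)%:R).
  rewrite -comp_mpoly_meval kill_Y.
  have -> : (a == b) = (x == y).
    have hu := uniq_sorted_elems (dcol D l).
    by rewrite -[x == y]/(val x == val y) -hx -hy nth_uniq // size_sorted_elems.
  case: (eqVneq x y) => [<-|xy].
    rewrite andbN. have h := ev_Y R x x. rewrite eqxx in h. Time exact h.
  case: ifP => _; first by rewrite meval0.
  have h := ev_Y R x y. rewrite (negbTE xy) in h. exact h.
by move/eqP; rewrite oner_eq0.
Qed.

Theorem lemma5p7 (R : realType) (n : nat) (D : diagram n) (k l : 'I_n)
    (m : nat) (Chat : 'I_m -> diagram n) :
  (forall i, diag_le (Chat i) (dhat k l D)) ->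
  (forall i p, p \in Chat i -> (p.1 != k) && (p.2 != l)) ->
  lin_dependent (fun i : 'I_m =>
    \prod_(j < n) yminor R (dcol (daug k l D (Chat i)) j) (dcol D j)) ->
  lin_dependent (fun i : 'I_m =>
    \prod_(j < n | j != l)
       yminor R (dcol (Chat i) j) (dcol (dhat k l D) j)).
Proof.
move=> _ H [c [[i0 ci0] hsum]].
pose G := kill R k (yminor R (dcol D l) (dcol D l)) * \prod_(j < n | j != l) gcol R D k j.
have key : forall i : 'I_m, exists e : complex R, e != 0 /\
    kill R k (\prod_(j < n) yminor R (dcol (daug k l D (Chat i)) j) (dcol D j)) =
    e *: (G * \prod_(j < n | j != l) yminor R (dcol (Chat i) j) (dcol (dhat k l D) j)).
  move=> i.
  have [e he hprod] : exists2 e : complex R, e != 0 &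
     \prod_(j < n | j != l) kill R k (yminor R (dcol (daug k l D (Chat i)) j) (dcol D j)) =
     e *: \prod_(j < n | j != l) (gcol R D k j * yminor R (dcol (Chat i) j) (dcol (dhat k l D) j)).
    apply: (big_ind2 (fun x y => exists2 e : complex R, e != 0 & x = e *: y)).
    - by exists 1; rewrite ?oner_neq0 ?scale1r.
    - move=> x1 x2 y1 y2 [e1 h1 ->] [e2 h2 ->]; exists (e1 * e2).
        exact: mulf_neq0.
      by rewrite -scalerAl -scalerAr scalerA.
    - move=> j hj; exact: (@col_fact R n D (Chat i) k l j (H i) hj).
  exists e; split => //.
  rewrite rmorph_prod (bigD1 l); last by [].
  rewrite (@dcol_aug_l n D (Chat i) k l (H i)).
  Time rewrite -[LHS]/(kill R k (yminor R (dcol D l) (dcol D l)) *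
     \prod_(j < n | j != l) kill R k (yminor R (dcol (daug k l D (Chat i)) j) (dcol D j))).
  by rewrite hprod big_split -scalerAr mulrA.
have [e he] := fin_all_exists key.
exists (fun i => c i * e i); split.
  by exists i0; apply: mulf_neq0 => //; case: (he i0).
have h0 := congr1 (kill R k) hsum.
rewrite raddf0 raddf_sum in h0.
have hG : G * \sum_(i < m) (c i * e i) *:
    \prod_(j < n | j != l) yminor R (dcol (Chat i) j) (dcol (dhat k l D) j) = 0.
  rewrite -[RHS]h0 mulr_sumr; apply: eq_bigr => i _.
  case: (he i) => _ hi.
  rewrite -[RHS]/(kill R k (c i *: \prod_(j < n) yminor R (dcol (daug k l D (Chat i)) j) (dcol D j))).
  by rewrite comp_mpolyZ hi scalerA -scalerAr.
move/eqP: hG; rewrite mulf_eq0 => /orP[hG|/eqP //].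
by move: (G_neq0 R D k l); rewrite -/G hG.
Qed.
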